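(* Let $\Sigma_1,\Sigma_2$ be systems as in the context and let $\mathcal R=\ker([R_1\ \ -R_2])\subseteq\mathbb R^{n_1}\times\mathbb R^{n_2}$ (with $R_i\in\mathbb R^{r\times n_i}$) be a total stochastic bisimulation relation between $\Sigma_1$ and $\Sigma_2$. Then for every $(x_1^0,x_2^0)\in\mathcal R$, every input $\mathbf u$ and every $t\ge0$, the random vectors $R_1\mathbf x_1|_{x_1^0,\mathbf u}(t)$ and $R_2\mathbf x_2|_{x_2^0,\mathbf u}(t)$ have the same probability distribution.
   Context: For $i=1,2$, $\Sigma_i$ is the system $x_i(t+1)=A_ix_i(t)+B_iu(t)+G_iw_i(t)$, $y_i(t)=C_ix_i(t)+\nu_i(t)$, $t\in\mathbb{N}$, with $x_i\in\mathbb{R}^{n_i}$, $u\in\mathbb{R}^m$, $w_i\in\mathbb{R}^{l_i}$, $y_i,\nu_i\in\mathbb{R}^p$, where $(w_i(t))_t$ is i.i.d. with $w_i(t)\sim\mathcal N(\mu_i,I_{l_i})$, $(\nu_i(t))_t$ is i.i.d. with $\nu_i(t)\sim\mathcal N(0,\Psi_i)$, and the two sequences are mutually independent. For a deterministic initial state $x_i^0$ and deterministic input $\mathbf u:\mathbb N\to\mathbb R^m$, $\mathbf x_i|_{x_i^0,\mathbf u}(t)=A_i^tx_i^0+\sum_{\tau=0}^{t-1}A_i^{t-1-\tau}(B_iu(\tau)+G_iw_i(\tau))$, $\mathbf y_i|_{x_i^0,\mathbf u}(t)=C_i\mathbf x_i|_{x_i^0,\mathbf u}(t)+\nu_i(t)$;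 $\mathbf P(\cdot\mid x_i^0)$ is probability for the process started at $x_i^0$. Processes are stochastically equivalent ($\sim$) if all finite-dimensional joint distributions coincide. $\mathrm{supp}(v)=\{z:\mathbf P(v\in B_\rho(z))>0\ \forall\rho>0\}$. For a relation $\mathcal R$: $\mathcal R(X_1)=\{x_2:\exists x_1\in X_1,(x_1,x_2)\in\mathcal R\}$, $\mathcal R^{-1}(X_2)=\{x_1:\exists x_2\in X_2,(x_1,x_2)\in\mathcal R\}$; total means $\mathcal R(\mathbb R^{n_1})=\mathbb R^{n_2}$ and $\mathcal R^{-1}(\mathbb R^{n_2})=\mathbb R^{n_1}$. A subspace $\mathcal R\subseteq\mathbb R^{n_1}\times\mathbb R^{n_2}$ is a stochastic bisimulation relation between $\Sigma_1,\Sigma_2$ if for every $(x_1^0,x_2^0)\in\mathcal R$, every input $\mathbf u$ and every $t\in\mathbb N$: (i) for every measurable $X_1\subseteq\mathcal R^{-1}(\mathbb R^{n_2})$, $\mathbf P(\mathbf x_1|_{x_1^0,\mathbf u}(t)\in X_1\mid x_1^0)=\mathbf P(\mathbf x_2|_{x_2^0,\mathbf u}(t)\in\mathcal R(X_1\cap\mathrm{supp}(\mathbf x_1|_{x_1^0,\mathbf u}(t)))\mid x_2^0)$; (ii) for every measurable $X_2\subseteq\mathcal R(\mathbb R^{n_1})$, $\mathbf P(\mathbf x_2|_{x_2^0,\mathbf u}(t)\in X_2\mid x_2^0)=\mathbf P(\mathbf x_1|_{x_1^0,\mathbf u}(t)\in\mathcal R^{-1}(X_2\cap\mathrm{supp}(\mathbf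 x_2|_{x_2^0,\mathbf u}(t)))\mid x_1^0)$; (iii) $\mathbf y_1|_{x_1^0,\mathbf u}\sim\mathbf y_2|_{x_2^0,\mathbf u}$. *)

(* Defs.v *)
From HB Require Import structures.
From mathcomp Require Import all_boot all_order all_algebra.
From mathcomp Require Import all_classical all_reals all_analysis.

Set Implicit Arguments.
Unset Strict Implicit.
Unset Printing Implicit Defensive.

Import Order.TTheory GRing.Theory Num.Theory.
Local Open Scope classical_set_scope.
Local Open Scope ring_scope.

Section Defs.
Variable R : realType.

Definition sqdist (a b : nat) (x z : 'M[R]_(a, b)) : R :=
  \sum_(i < a) \sum_(j < b) (x i j - z i j) ^+ 2.

Definition eball (a b : nat) (z : 'M[R]_(a, b)) (rho : R) : set 'M[R]_(a, b) :=
  [set x | sqdist x z < rho ^+ 2].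

Definition eopen (a b : nat) (U : set 'M[R]_(a, b)) : Prop :=
  forall x, U x -> exists2 rho : R, 0 < rho & eball x rho `<=` U.

Definition borel (a b : nat) : set (set 'M[R]_(a, b)) := <<s @eopen a b >>.

Context {d : measure_display} {T : measurableType d}.

Definition rvec (a b : nat) (X : T -> 'M[R]_(a, b)) : Prop :=
  forall B, borel B -> measurable (X @^-1` B).

Definition prob (P : probability T R) (a b : nat) (X : T -> 'M[R]_(a, b))
    (S : set 'M[R]_(a, b)) : \bar R := P (X @^-1` S).

Definition supp (P : probability T R) (a b : nat) (X : T -> 'M[R]_(a, b))
    : set 'M[R]_(a, b) :=
  [set z | forall rho : R, 0 < rho -> (0 < prob P X (eball z rho))%E].

Definition dotv (n : nat) (a x : 'cV[R]_n) : R := (a^T *m x) 0 0.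

(* X ~ N(mu, Sig): Gaussian random vector, defined (degenerate covariances
   allowed) through its characteristic function
   E[exp(i a.X)] = exp(i a.mu - a.Sig a / 2), split in real/imaginary parts *)
Definition gaussian (P : probability T R) (n : nat) (X : T -> 'cV[R]_n)
    (mu : 'cV[R]_n) (Sig : 'M[R]_n) : Prop :=
  rvec X /\
  forall a : 'cV[R]_n,
    (\int[P]_w (cos (dotv a (X w)))%:E =
       (expR (- (dotv a (Sig *m a)) / 2) * cos (dotv a mu))%:E)%E /\
    (\int[P]_w (sin (dotv a (X w)))%:E =
       (expR (- (dotv a (Sig *m a)) / 2) * sin (dotv a mu))%:E)%E.

(* N(0, Psi), and the whole family
   {w(t), nu(t) : t} mutually independent (product rule on every finite
   subfamily; unconstrained members are given the whole space). *)
Definition noise_model (P : probability T R) (l p : nat)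
    (mu : 'cV[R]_l) (Psi : 'M[R]_p)
    (w : nat -> T -> 'cV[R]_l) (nu : nat -> T -> 'cV[R]_p) : Prop :=
  (forall t, gaussian P (w t) mu 1%:M) /\
  (forall t, gaussian P (nu t) 0 Psi) /\
  (forall (N : nat) (Bw : nat -> set 'cV[R]_l) (Bn : nat -> set 'cV[R]_p),
     (forall t, borel (Bw t)) -> (forall t, borel (Bn t)) ->
     P (\bigcap_(t in [set k | (k < N)%N]) (w t @^-1` Bw t `&` nu t @^-1` Bn t))
     = (\prod_(t < N) (P (w t @^-1` Bw t) * P (nu t @^-1` Bn t)))%E).

End Defs.

(* Sigma : x(t+1) = A x(t) + B u(t) + G w(t),  y(t) = C x(t) + nu(t),
   realised on a probability space (T, P) with noise processes w, nu. *)
Record lsys (R : realType) (n m l p : nat) := Lsys {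
  sA : 'M[R]_n; sB : 'M[R]_(n, m); sG : 'M[R]_(n, l); sC : 'M[R]_(p, n);
  smu : 'cV[R]_l; sPsi : 'M[R]_p }.

Section Traj.
Variables (R : realType) (n m l p : nat) (S : lsys R n m l p).
Context {T : Type}.

Definition xtraj (w : nat -> T -> 'cV[R]_l) (x0 : 'cV[R]_n)
    (u : nat -> 'cV[R]_m) (t : nat) (om : T) : 'cV[R]_n :=
  (sA S) ^+ t *m x0 +
  \sum_(tau < t) (sA S) ^+ (t - 1 - tau) *m (sB S *m u tau + sG S *m w tau om).

Definition ytraj (w : nat -> T -> 'cV[R]_l) (nu : nat -> T -> 'cV[R]_p)
    (x0 : 'cV[R]_n) (u : nat -> 'cV[R]_m) (t : nat) (om : T) : 'cV[R]_p :=
  sC S *m xtraj w x0 u t om + nu t om.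
End Traj.

Definition stoch_equiv (R : realType) (p : nat)
    {d1 : measure_display} {T1 : measurableType d1} (P1 : probability T1 R)
    {d2 : measure_display} {T2 : measurableType d2} (P2 : probability T2 R)
    (y1 : nat -> T1 -> 'cV[R]_p) (y2 : nat -> T2 -> 'cV[R]_p) : Prop :=
  forall (N : nat) (ts : 'I_N -> nat) (B : set 'M[R]_(p, N)),
    borel B ->
    prob P1 (fun om => \matrix_(i < p, k < N) y1 (ts k) om i 0) B =
    prob P2 (fun om => \matrix_(i < p, k < N) y2 (ts k) om i 0) B.

Definition rel_img {X Y : Type} (Rel : set (X * Y)) (A : set X) : set Y :=
  [set y | exists2 x, A x & Rel (x, y)].
Definition rel_preimg {X Y : Type} (Rel : set (X * Y)) (B : set Y) : set X :=
  [set x | exists2 y, B y & Rel (x, y)].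

Definition total_rel {X Y : Type} (Rel : set (X * Y)) : Prop :=
  rel_img Rel setT = setT /\ rel_preimg Rel setT = setT.

Definition subspace_rel (R : realType) (n1 n2 : nat)
    (Rel : set ('cV[R]_n1 * 'cV[R]_n2)) : Prop :=
  Rel (0, 0) /\
  (forall (a : R) x1 x2 y1 y2, Rel (x1, x2) -> Rel (y1, y2) ->
     Rel (a *: x1 + y1, a *: x2 + y2)).

Definition stoch_bisim (R : realType) (n1 n2 m l1 l2 p : nat)
    (S1 : lsys R n1 m l1 p) (S2 : lsys R n2 m l2 p)
    {d1 : measure_display} {T1 : measurableType d1} (P1 : probability T1 R)
    (w1 : nat -> T1 -> 'cV[R]_l1) (nu1 : nat -> T1 -> 'cV[R]_p)
    {d2 : measure_display} {T2 : measurableType d2} (P2 : probability T2 R)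
    (w2 : nat -> T2 -> 'cV[R]_l2) (nu2 : nat -> T2 -> 'cV[R]_p)
    (Rel : set ('cV[R]_n1 * 'cV[R]_n2)) : Prop :=
  subspace_rel Rel /\
  forall x10 x20, Rel (x10, x20) -> forall (u : nat -> 'cV[R]_m),
    (forall t : nat,
      (forall X1 : set 'cV[R]_n1, borel X1 -> X1 `<=` rel_preimg Rel setT ->
         prob P1 (xtraj S1 w1 x10 u t) X1 =
         prob P2 (xtraj S2 w2 x20 u t)
           (rel_img Rel (X1 `&` supp P1 (xtraj S1 w1 x10 u t)))) /\
      (forall X2 : set 'cV[R]_n2, borel X2 -> X2 `<=` rel_img Rel setT ->
         prob P2 (xtraj S2 w2 x20 u t) X2 =
         prob P1 (xtraj S1 w1 x10 u t)
           (rel_preimg Rel (X2 `&` supp P2 (xtraj S2 w2 x20 u t))))) /\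
    stoch_equiv P1 P2 (ytraj S1 w1 nu1 x10 u) (ytraj S2 w2 nu2 x20 u).

Definition ker_rel (R : realType) (r n1 n2 : nat)
    (R1 : 'M[R]_(r, n1)) (R2 : 'M[R]_(r, n2)) : set ('cV[R]_n1 * 'cV[R]_n2) :=
  [set xx | R1 *m xx.1 - R2 *m xx.2 = 0].

(* Main.v *)
Require Import Defs.
From HB Require Import structures.
From mathcomp Require Import all_boot all_order all_algebra.
From mathcomp Require Import all_classical all_reals all_analysis.
From mathcomp Require Import measurable_realfun.
Import Order.TTheory GRing.Theory Num.Theory numFieldTopology.Exports numFieldNormedType.Exports.
Local Open Scope classical_set_scope.
Local Open Scope ring_scope.
From mathcomp Require Import ring lra.
Lemma measR (R : realType) : @measurable _ R = <<s @RGenOpens.G R>>.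
Proof. apply: eq_trans (RGenOpens.measurableE R); reflexivity. Qed.

Lemma sq_le (R : realType) (d t : R) : -d < t -> t < d -> t^+2 <= d^+2.
Proof. move=> h1 h2; nra. Qed.
Lemma fin_ineq (R : realType) (N d : R) : 0<=N -> 0<d -> d^+2 * N < (d*(N+1))^+2.
Proof. move=> h1 h2; nra. Qed.

Section Topo.
Variable R : realType.
Variables a b : nat.
Implicit Types x y z : 'M[R]_(a,b).

Lemma sqdist_ge0 x z : 0 <= sqdist x z.
Proof. apply: sumr_ge0 => i _; apply: sumr_ge0 => j _; exact: sqr_ge0. Qed.

Lemma sqdist_term x z i j : (x i j - z i j)^+2 <= sqdist x z.
Proof.
rewrite /sqdist (bigD1 i) //= (bigD1 j) //= -addrA lerDl.
apply: addr_ge0; first by apply: sumr_ge0 => k _; exact: sqr_ge0.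
apply: sumr_ge0 => k _; apply: sumr_ge0 => l _; exact: sqr_ge0.
Qed.

Lemma ballE x e y : ball x e y <-> 0 < e /\ forall i j, `|x i j - y i j| < e.
Proof. by rewrite /ball /=; split => -[e0 h]; split => // i j; have := h i j; rewrite -ball_normE. Qed.

Lemma sq_lt_abs (d rho : R) : 0 < rho -> d ^+ 2 < rho ^+ 2 -> `|d| < rho.
Proof. move=> r0 h; rewrite ltr_norml; apply/andP; split; nra. Qed.

Lemma eball_ball x rho : 0 < rho -> eball x rho `<=` ball x rho.
Proof.
move=> rho0 y; rewrite /eball /= => h.
apply/ballE; split => // i j.
have := le_lt_trans (sqdist_term y x i j) h.
by rewrite -normrN opprB; apply: sq_lt_abs.
Qed.

Lemma ball_eball x rho : 0 < rho -> exists2 d, 0 < d & ball x d `<=` eball x rho.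
Proof.
move=> rho0; pose N : R := (a * b)%:R.
have N0 : 0 <= N by rewrite /N ler0n.
have dP : 0 < rho / (N + 1) by apply: divr_gt0 => //; lra.
exists (rho / (N + 1)) => //.
set d := rho / (N + 1).
have hd : d * (N + 1) = rho by rewrite /d mulfVK //; apply/negP => /eqP; lra.
have hN : N = (a * b)%:R by [].
have d0 : 0 < d by [].
clearbody d N.
move=> y /ballE [_ h]; rewrite /eball /=.
apply: (@le_lt_trans _ _ (\sum_(i < a) \sum_(j < b) d^+2)).
  apply: ler_sum => i _; apply: ler_sum => j _.
  have := h i j; rewrite -normrN opprB; set t := (y i j - x i j) => ht.
  move: ht; rewrite ltr_norml => /andP[h1 h2]. clearbody t. clear h. nra.
rewrite !sumr_const !card_ord -hd -mulrnA mulnC -mulr_natr -hN.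
exact: fin_ineq.
Qed.
Lemma eopen_open (U : set 'M[R]_(a,b)) : eopen U <-> open U.
Proof.
split.
- move=> h; rewrite openE => x Ux; rewrite /interior.
  apply/nbhs_ballP; have [rho r0 sub] := h x Ux.
  have [d d0 sub'] := ball_eball x rho r0.
  by exists d => //; exact: subset_trans sub' sub.
- rewrite openE => h x Ux; have := h x Ux; rewrite /interior => /nbhs_ballP [e e0 sub].
  by exists e => //; exact: subset_trans (eball_ball x e e0) sub.
Qed.
End Topo.

Lemma mpre d d' (aT : measurableType d) (rT : measurableType d') (f : aT -> rT) Y :
  measurable_fun setT f -> measurable Y -> measurable (f @^-1` Y).
Proof. by move=> mf mY; rewrite -[f @^-1` Y]setTI; exact: mf. Qed.
Arguments mpre {d d' aT rT f Y}.

Section Meas.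
Variable R : realType.
Local Notation MT a b := (g_sigma_algebraType (@eopen R a b)).

Lemma meas_forall_seq d (T : measurableType d) (I : eqType) (s : seq I) (S : I -> set T) :
  (forall p, measurable (S p)) -> measurable [set om | forall p, p \in s -> S p om].
Proof.
move=> hS; elim: s => [|p s IH].
  by rewrite (_ : [set _ | _] = setT) //; apply/seteqP; split => // x _ p; rewrite in_nil.
rewrite (_ : [set _ | _] = S p `&` [set om | forall q, q \in s -> S q om]).
  exact: measurableI.
apply/seteqP; split => x /=.
  by move=> h; split => [|q qs]; apply: h; rewrite inE ?eqxx ?qs ?orbT.
by move=> [h1 h2] q; rewrite inE => /orP[/eqP->|/h2].
Qed.

Lemma meas_forall_fin d (T : measurableType d) (I : finType) (S : I -> set T) :
  (forall p, measurable (S p)) -> measurable [set om | forall p, S p om].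
Proof.
move=> hS; rewrite (_ : [set _ | _] = [set om | forall p, p \in enum I -> S p om]).
  exact: meas_forall_seq.
by apply/seteqP; split => x /= h p //; apply: h; rewrite mem_enum.
Qed.

Lemma cont_meas a b (f : 'M[R]_(a,b) -> R) : continuous f ->
  measurable_fun setT (f : MT a b -> R).
Proof.
move=> cf; apply: measurability. exact: measR. move=> _ [Y [x [y ->]] <-].
rewrite setTI; apply: sub_sigma_algebra; apply/eopen_open.
by apply: open_comp => // z _; exact: cf.
Qed.

Lemma entries_meas d (T : measurableType d) a b (X : T -> 'M[R]_(a,b)) :
  (forall i j, measurable_fun setT (fun om => X om i j)) ->
  measurable_fun setT (X : T -> MT a b).
Proof.
move=> hX; apply: measurability; first reflexivity.
move=> _ [U hU <-]; rewrite setTI.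
pose box (q : 'M[rat]_(a,b)) (k : nat) := [set y : 'M[R]_(a,b) |
  forall i j, `|y i j - ratr (q i j)| < k.+1%:R^-1].
pose F (c : 'M[rat]_(a,b) * nat) :=
  if `[< box c.1 c.2 `<=` U >] then X @^-1` box c.1 c.2 else set0.
have -> : X @^-1` U = \bigcup_c F c.
  apply/seteqP; split.
  - move=> om /= Uom.
    have [rho r0 sub] := hU _ Uom.
    have [e e0 sube] := @ball_eball R a b (X om) rho r0.
    have [k hk] : exists k : nat, 0 + k.+1%:R^-1 < e / 2.
      by apply: ltr_add_invr; lra.
    rewrite add0r in hk.
    have hq : forall p : 'I_a * 'I_b, exists q : rat,
        `|X om p.1 p.2 - ratr q| < k.+1%:R^-1.
      move=> p; have kp : 0 < k.+1%:R^-1 :> R by rewrite invr_gt0 ltr0n.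
      have hlt : X om p.1 p.2 - k.+1%:R^-1 < X om p.1 p.2 + k.+1%:R^-1.
        by rewrite ltrD2l gtrN.
      have [q] := rat_in_itvoo hlt.
      by rewrite in_itv /= => hq; exists q; rewrite ltr_distlC.
    have [g hg] := choice hq.
    exists (\matrix_(i,j) g (i,j), k) => //.
    have inbox : box (\matrix_(i,j) g (i,j)) k (X om).
      by move=> i j; rewrite mxE; apply: (hg (i,j)).
    rewrite /F /= ifT //; apply/asboolP => y hy; apply: sub; apply: sube.
    apply/ballE; split => // i j.
    have h1 := inbox i j; have h2 := hy i j.
    rewrite -(subrK (ratr ((\matrix_(i0, j0) g (i0, j0)) i j)) (X om i j)) -addrA.
    apply: le_lt_trans (ler_normD _ _) _.
    rewrite -normrN opprD opprK addrC in h2.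
    clear -h1 h2 hk.
    by rewrite [X in _ < X]splitr; apply: ltrD; exact: lt_trans hk.
  - by move=> om [c _]; rewrite /F; case: asboolP => // h; apply: h.
apply: countable_bigcupT_measurable; first exact: countableP.
move=> [q k]; rewrite /F /=; case: asboolP => _; last exact: measurable0.
rewrite (_ : X @^-1` _ = [set om | forall p : 'I_a * 'I_b,
   ((fun om => X om p.1 p.2) @^-1`
     `]ratr (q p.1 p.2) - k.+1%:R^-1, ratr (q p.1 p.2) + k.+1%:R^-1[) om]).
  apply: meas_forall_fin => p.
  have hh := (mpre (hX p.1 p.2) (measurable_itv `]ratr (q p.1 p.2) - k.+1%:R^-1, ratr (q p.1 p.2) + k.+1%:R^-1[)). exact: hh.
apply/seteqP; split => om /=.
  by move=> h [i j]; have := h i j; rewrite /= in_itv /= ltr_distl.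
by move=> h i j; have := h (i, j); rewrite /= in_itv /= ltr_distl.
Qed.
Arguments entries_meas {d T a b X}.

Definition mfe d (T : measurableType d) a b (X : T -> 'M[R]_(a,b)) :=
  forall i j, measurable_fun setT (fun om => X om i j).
Arguments mfe {d T a b} X.

Lemma rvec_mfe d (T : measurableType d) a b (X : T -> 'M[R]_(a,b)) :
  rvec X -> mfe X.
Proof.
move=> hX i j.
have mX : measurable_fun setT (X : T -> MT a b).
  by move=> _ Y mY; rewrite setTI; exact: hX.
have h1 := @cont_meas a b _ (@coord_continuous R a b i j).
have h2 := measurableT_comp h1 mX.
exact: h2.
Qed.

Lemma mfe_rvec d (T : measurableType d) a b (X : T -> 'M[R]_(a,b)) :
  mfe X -> rvec X.
Proof. move=> h B hB; have h1 := entries_meas h. have h2 := @mpre _ _ _ (MT a b) X B h1. exact: h2. Qed.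

Lemma mfe_cst d (T : measurableType d) a b (c : 'M[R]_(a,b)) :
  mfe (fun _ : T => c).
Proof. by move=> i j; exact: measurable_cst. Qed.

Lemma mfe_add d (T : measurableType d) a b (X Y : T -> 'M[R]_(a,b)) :
  mfe X -> mfe Y -> mfe (fun om => X om + Y om).
Proof.
move=> hX hY i j.
have -> : (fun om => (X om + Y om) i j) = (fun om => X om i j + Y om i j).
  by apply/funext => om; rewrite mxE.
exact: measurable_funD.
Qed.

Lemma mfe_mul d (T : measurableType d) a b c (A : 'M[R]_(c,a)) (X : T -> 'M[R]_(a,b)) :
  mfe X -> mfe (fun om => A *m X om).
Proof.
move=> hX i j.
have -> : (fun om => (A *m X om) i j) = (fun om => \sum_k A i k * X om k j).
  by apply/funext => om; rewrite mxE.
apply: measurable_sum => k.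
exact: measurable_funM (measurable_cst _) (hX k j).
Qed.

Lemma mfe_sum d (T : measurableType d) a b (t : nat) (X : nat -> T -> 'M[R]_(a,b)) :
  (forall tau, mfe (X tau)) -> mfe (fun om => \sum_(tau < t) X tau om).
Proof.
move=> hX i j.
have -> : (fun om => (\sum_(tau < t) X tau om) i j) = (fun om => \sum_(tau < t) X tau om i j).
  by apply/funext => om; rewrite summxE.
by apply: measurable_sum => k; exact: hX.
Qed.

Lemma mfe_xtraj d (T : measurableType d) n m l p (S : lsys R n m l p)
  (w : nat -> T -> 'cV[R]_l) x0 u t :
  (forall tau, rvec (w tau)) -> mfe (xtraj S w x0 u t).
Proof.
move=> hw; rewrite /xtraj.
apply: mfe_add; first exact: mfe_cst.
apply: (@mfe_sum _ _ _ _ t (fun tau om => sA S ^+ (t - 1 - tau) *m (sB S *m u tau + sG S *m w tau om))) => tau.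
apply: mfe_mul; apply: mfe_add; first exact: mfe_cst.
by apply: mfe_mul; apply: rvec_mfe.
Qed.

End Meas.
Arguments mfe {R d T a b} X.
Arguments mfe_rvec {R d T a b X}.
Arguments mfe_xtraj {R d T n m l p S w x0 u t}.
Arguments rvec_mfe {R d T a b X}.

Section Supp.
Variable R : realType.
Local Notation MT a b := (g_sigma_algebraType (@eopen R a b)).

Lemma sqdist_cont a b (z : 'M[R]_(a,b)) : continuous (fun x : 'M[R]_(a,b) => sqdist x z).
Proof.
rewrite /sqdist.
apply: continuous_big => [|i _]; first exact: add_continuous.
apply: continuous_big => [|j _]; first exact: add_continuous.
move=> x.
apply: (@continuous_comp _ _ _ (fun x : 'M[R]_(a,b) => x i j - z i j) (fun r : R => r ^+ 2)).
  apply: continuousB; first exact: coord_continuous.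
  exact: cst_continuous.
exact: exprn_continuous.
Qed.

Lemma eball_borel a b (z : 'M[R]_(a,b)) rho : borel (eball z rho).
Proof.
apply: sub_sigma_algebra; apply/eopen_open.
rewrite (_ : eball z rho = (fun x => sqdist x z) @^-1` [set r | r < rho ^+ 2]) //.
apply: open_comp; last exact: open_lt.
by move=> x _; exact: sqdist_cont.
Qed.

Lemma sq_tri (y z w : R) : (y - z) ^+ 2 <= 2 * (y - w) ^+ 2 + 2 * (w - z) ^+ 2.
Proof. have := sqr_ge0 (y - w - (w - z)); nra. Qed.

Lemma sqdist_tri a b (y z w : 'M[R]_(a,b)) :
  sqdist y z <= 2 * sqdist y w + 2 * sqdist w z.
Proof.
rewrite /sqdist !mulr_sumr -big_split /=; apply: ler_sum => i _.
rewrite !mulr_sumr -big_split /=; apply: ler_sum => j _.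
exact: sq_tri.
Qed.

Lemma supp_closed d (T : measurableType d) (P : probability T R) a b
  (X : T -> 'M[R]_(a,b)) : rvec X -> eopen (~` supp P X).
Proof.
move=> hX z /= nz.
have [rho [r0 hr]] : exists rho, 0 < rho /\ ~ (0 < prob P X (eball z rho))%E.
  apply: contrapT => hn; apply: nz => rho r0.
  apply: contrapT => hp; apply: hn; exists rho; split => //.
have r20 : 0 < rho / 2 by lra.
exists (rho / 2) => // z' hz' hs.
apply: hr; apply: (lt_le_trans (hs _ r20)).
apply: le_measure; rewrite ?inE; [apply: hX; exact: eball_borel|apply: hX; exact: eball_borel|].
apply: preimage_subset => y hy; rewrite /eball /= in hy hz' *.
apply: (le_lt_trans (sqdist_tri _ _ y z z')).
have e : rho ^+ 2 = 2 * (rho / 2) ^+ 2 + 2 * (rho / 2) ^+ 2.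
  by field.
by rewrite e; apply: ltrD; rewrite ltr_pM2l.
Qed.
End Supp.
Arguments supp_closed {R d T} P {a b X}.

Section Img.
Variable R : realType.
Local Notation MT a b := (g_sigma_algebraType (@eopen R a b)).

Lemma mx_cont_entries (T : topologicalType) c e (f : T -> 'M[R]_(c,e)) :
  (forall i j, continuous (fun x => f x i j)) -> continuous f.
Proof.
move=> h x; apply/cvg_ballP => eps e0.
have : \forall y \near x, forall p : 'I_c * 'I_e, ball (f x p.1 p.2) eps (f y p.1 p.2).
  apply: filter_forall => p.
  by have := h p.1 p.2 x; move/cvg_ballP => /(_ eps e0).
apply: filterS => y hy; split => // i j; exact: (hy (i,j)).
Qed.

Lemma closed_pre (T U : topologicalType) (f : T -> U) (D : set U) :
  continuous f -> closed D -> closed (f @^-1` D).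
Proof.
move=> cf cD; rewrite -openC preimage_setC; apply: open_comp.
  by move=> x _; exact: cf.
by rewrite openC.
Qed.
Arguments closed_pre {T U f D}.

Lemma img_borel n r (L : 'M[R]_(r,n)) (C : set 'cV[R]_n) :
  eopen (~` C) -> borel [set y | exists2 x, C x & L *m x = y].
Proof.
move=> hC.
have Cc : closed C by rewrite -openC; apply/eopen_open.
pose P (k : nat) := [set y | exists2 x, (C x /\ `|x^T| <= k%:R) & L *m x = y].
have -> : [set y | exists2 x, C x & L *m x = y] = \bigcup_k P k.
  apply/seteqP; split => y.
    move=> [x Cx <-]; exists (Num.bound `|x^T|) => //; exists x => //; split => //.
    exact/ltW/archi_boundP/normr_ge0.
  by move=> [k _ [x [Cx _] <-]]; exists x.
apply: (@bigcupT_measurable _ (MT r 1)) => k.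
suff : closed (P k).
  move=> cP; rewrite -[P k]setCK; apply: (@measurableC _ (MT r 1)).
  by apply: sub_sigma_algebra; apply/eopen_open; rewrite openC.
pose g (v : 'rV[R]_n) : 'cV[R]_r := L *m v^T.
pose K := [set v : 'rV[R]_n | C v^T /\ `|v| <= k%:R].
have gc : continuous g.
  apply: mx_cont_entries => i j.
  rewrite (_ : (fun v => g v i j) = (fun v => \sum_l L i l * v j l)); last first.
    by apply/funext => v; rewrite /g mxE; apply: eq_bigr => l _; rewrite mxE.
  apply: continuous_big => [|l _]; first exact: add_continuous.
  move=> v; apply: (@continuous_comp _ _ _ (fun v : 'rV[R]_n => v j l) ( *%R (L i l))).
    exact: coord_continuous.
  exact: mulrl_continuous.
have tc : continuous (fun v : 'rV[R]_n => v^T).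
  apply: mx_cont_entries => i j.
  rewrite (_ : (fun v : 'rV[R]_n => v^T i j) = (fun v => v j i)).
    exact: coord_continuous.
  by apply/funext => v; rewrite mxE.
have Kc : compact K.
  apply: bounded_closed_compact.
    rewrite /= /bounded_near; near=> M; move=> v [_ hv] /=.
    apply: le_trans hv _; near: M; apply: nbhs_pinfty_ge; exact: num_real.
  apply: closedI; first exact: (closed_pre tc Cc).
  exact: (closed_pre (@norm_continuous _ 'rV[R]_n) (@closed_le R (k%:R))).
have -> : P k = g @` K.
  apply/seteqP; split => y.
    by move=> [x [Cx hx] <-]; exists x^T; rewrite /K /g /= trmxK.
  by move=> [v [Cv hv] <-]; exists v^T; rewrite ?trmxK.
apply: compact_closed; first exact: norm_hausdorff.
apply: continuous_compact => //; exact: continuous_subspaceT.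
Unshelve. all: by end_near.
Qed.
End Img.
Arguments img_borel {R n r} L {C}.

Section Main.
Variable R : realType.
Local Notation MT a b := (g_sigma_algebraType (@eopen R a b)).

Lemma lin_borel a b c (A : 'M[R]_(c,a)) (B : set 'M[R]_(c,b)) :
  borel B -> borel [set x : 'M[R]_(a,b) | B (A *m x)].
Proof.
move=> hB.
have h : mfe (fun x : MT a b => A *m x).
  apply: mfe_mul => i j; exact: (@cont_meas R a b _ (@coord_continuous R a b i j)).
exact: (mfe_rvec h) B hB.
Qed.

Lemma ker_relE r n1 n2 (R1 : 'M[R]_(r,n1)) (R2 : 'M[R]_(r,n2)) x1 x2 :
  ker_rel R1 R2 (x1, x2) <-> R1 *m x1 = R2 *m x2.
Proof.
rewrite /ker_rel /=; split; first by move/eqP; rewrite subr_eq0 => /eqP.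
by move=> ->; rewrite subrr.
Qed.
End Main.
Arguments lin_borel {R a b c} A {B}.

Theorem lemma2 (R : realType) (n1 n2 m l1 l2 p r : nat)
    (S1 : lsys R n1 m l1 p) (S2 : lsys R n2 m l2 p)
    (d1 : measure_display) (T1 : measurableType d1) (P1 : probability T1 R)
    (w1 : nat -> T1 -> 'cV[R]_l1) (nu1 : nat -> T1 -> 'cV[R]_p)
    (d2 : measure_display) (T2 : measurableType d2) (P2 : probability T2 R)
    (w2 : nat -> T2 -> 'cV[R]_l2) (nu2 : nat -> T2 -> 'cV[R]_p)
    (R1 : 'M[R]_(r, n1)) (R2 : 'M[R]_(r, n2)) :
  noise_model P1 (smu S1) (sPsi S1) w1 nu1 ->
  noise_model P2 (smu S2) (sPsi S2) w2 nu2 ->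
  total_rel (ker_rel R1 R2) ->
  stoch_bisim S1 S2 P1 w1 nu1 P2 w2 nu2 (ker_rel R1 R2) ->
  forall (x10 : 'cV[R]_n1) (x20 : 'cV[R]_n2), ker_rel R1 R2 (x10, x20) ->
  forall (u : nat -> 'cV[R]_m) (t : nat) (B : set 'cV[R]_r), borel B ->
    prob P1 (fun om => R1 *m xtraj S1 w1 x10 u t om) B =
    prob P2 (fun om => R2 *m xtraj S2 w2 x20 u t om) B.
Proof.
move=> nm1 nm2 [timg tpre] [_ hb] x10 x20 hx u t B hB.
have [ht _] := hb x10 x20 hx u; have [hi hii] := ht t.
set x1 := xtraj S1 w1 x10 u t; set x2 := xtraj S2 w2 x20 u t.
have rx1 : rvec x1 by apply: mfe_rvec; apply: mfe_xtraj => tau; exact: (nm1.1 tau).1.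
have rx2 : rvec x2 by apply: mfe_rvec; apply: mfe_xtraj => tau; exact: (nm2.1 tau).1.
have sc1 := supp_closed P1 rx1.
have sc2 := supp_closed P2 rx2.
have hB1 : borel [set x : 'cV[R]_n1 | B (R1 *m x)] := lin_borel R1 hB.
have hB2 : borel [set x : 'cV[R]_n2 | B (R2 *m x)] := lin_borel R2 hB.
have e1 : prob P1 (fun om => R1 *m x1 om) B = prob P1 x1 [set x | B (R1 *m x)] by [].
have e2 : prob P2 (fun om => R2 *m x2 om) B = prob P2 x2 [set x | B (R2 *m x)] by [].
rewrite e1 e2.
apply/eqP; rewrite eq_le; apply/andP; split.
- have := hi _ hB1; rewrite tpre => /(_ (@subsetT _ _)) ->.
  set S := [set y | exists2 x, supp P1 x1 x & R1 *m x = y].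
  have hS : borel S := img_borel R1 sc1.
  have -> : rel_img (ker_rel R1 R2) ([set x | B (R1 *m x)] `&` supp P1 x1) =
            [set x | (B `&` S) (R2 *m x)].
    apply/seteqP; split => y.
      by move=> [x [Bx sx] /ker_relE e]; split; rewrite -e //; exists x.
    by move=> [By [x sx e]]; exists x; [split => //=; rewrite e | apply/ker_relE].
  apply: le_measure; rewrite ?inE.
  + apply: rx2; apply: lin_borel; exact: (@measurableI _ (g_sigma_algebraType (@eopen R r 1))).
  + exact: rx2 _ hB2.
  + by move=> om [].
- have := hii _ hB2; rewrite timg => /(_ (@subsetT _ _)) ->.
  set S := [set y | exists2 x, supp P2 x2 x & R2 *m x = y].
  have hS : borel S := img_borel R2 sc2.
  have -> : rel_preimg (ker_rel R1 R2) ([set x | B (R2 *m x)] `&` supp P2 x2) =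
            [set x | (B `&` S) (R1 *m x)].
    apply/seteqP; split => y.
      by move=> [x [Bx sx] /ker_relE e]; split; rewrite e //; exists x.
    by move=> [By [x sx e]]; exists x; [split => //=; rewrite e | apply/ker_relE; rewrite e].
  apply: le_measure; rewrite ?inE.
  + apply: rx1; apply: lin_borel; exact: (@measurableI _ (g_sigma_algebraType (@eopen R r 1))).
  + exact: rx1 _ hB1.
  + by move=> om [].
Qed.
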